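(* There exists a setting (with pairwise distinct budgets) such that, in the game under the BCP mechanism in which every player's budget-bid is fixed to his true budget ($g_i=B_i$) and each player's strategy is only his value-bid $b_i\ge0$, there is no pure Nash equilibrium (i.e. for every profile of value-bids some player can strictly increase his utility by changing only his own value-bid).
   Context: Setting: there are $k\ge 1$ slots with public click-through rates $\theta_1>\theta_2>\dots>\theta_k>0$, and $n\ge k$ players. Player $i$ has a private value per click $v_i\ge 0$ and a budget $B_i>0$; the budgets $B_1,\dots,B_n$ are pairwise distinct. A setting consists of $k,n,(\theta_j),(v_i),(B_i)$ together with a fixed strict priority order on the players used to break all ties. Each player $i$ submits a value-bid $b_i\ge 0$ and a budget-bid $g_i\ge 0$; a mechanism outputs an injective partial slot assignment (assigned player $i$ gets slot $s(i)\in\{1,\dots,k\}$) and a price per click $p(i)\ge0$ for each assigned player; unassigned players pay nothing. The utility of player $i$ is $u_i=0$ if $i$ is unassigned, $u_i=\theta_{s(i)}(v_i-p(i))$ if $i$ is assigned and $\theta_{s(i)}p(i)\le B_i$, and $u_i=-\infty$ if $i$ is assigned and $\theta_{s(i)}p(i)>B_i$. BCP: order the players by decreasing value-bid (ties broken by the priority order); each player's tentative price per click is the value-bid of the player immediately after him in this order (0 for the last player). Then process the players in this order; each player $i$ is assigned the highest-CTR slot $s$ not yet assigned such that $\theta_s\cdot(\text{his price})\le g_i$, and pays that price per click; if no unassigned slot satisfies this, he is left unassigned and pays nothing. *)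

(* Defs.v *)
From Stdlib Require Import Reals List Arith Bool.
Import ListNotations.
Open Scope R_scope.

(* Players are 0..n-1, slots are 0..k-1 (slot j has CTR theta j; the paper's
   slot j+1).  A utility of -infinity is represented by [None]. *)

Definition ext := option R.

Definition ext_lt (x y : ext) : Prop :=
  match x, y with
  | None, Some _ => True
  | Some a, Some c => a < c
  | _, None => False
  end.

Definition beforeb (b : nat -> R) (prio : nat -> nat) (i j : nat) : bool :=
  if Rlt_dec (b j) (b i) then true
  else if Req_EM_T (b i) (b j) then Nat.ltb (prio i) (prio j) else false.

Fixpoint insert_ord (b : nat -> R) (prio : nat -> nat) (x : nat) (l : list nat)
  : list nat :=
  match l with
  | [] => [x]
  | y :: l' => if beforeb b prio x y then x :: y :: l'
               else y :: insert_ord b prio x l'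
  end.

Definition bcp_order (n : nat) (b : nat -> R) (prio : nat -> nat) : list nat :=
  fold_right (insert_ord b prio) [] (seq 0 n).

(* highest-CTR (= smallest index, theta being decreasing) unassigned slot s
   with theta s * p <= g *)
Definition find_slot (k : nat) (theta : nat -> R) (taken : list nat) (p g : R)
  : option nat :=
  find (fun s => negb (existsb (Nat.eqb s) taken) &&
                 (if Rle_dec (theta s * p) g then true else false))
       (seq 0 k).

Fixpoint bcp_process (k : nat) (theta : nat -> R) (b g : nat -> R)
  (o : list nat) (taken : list nat) : list (nat * option (nat * R)) :=
  match o with
  | [] => []
  | i :: rest =>
      let p := match rest with j :: _ => b j | [] => 0 end in
      match find_slot k theta taken p (g i) with
      | Some s => (i, Some (s, p)) :: bcp_process k theta b g rest (s :: taken)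
      | None => (i, None) :: bcp_process k theta b g rest taken
      end
  end.

Fixpoint lookup (i : nat) (l : list (nat * option (nat * R))) : option (nat * R) :=
  match l with
  | [] => None
  | (j, r) :: l' => if Nat.eqb i j then r else lookup i l'
  end.

Definition bcp_outcome (k n : nat) (theta : nat -> R) (prio : nat -> nat)
  (b g : nat -> R) (i : nat) : option (nat * R) :=
  lookup i (bcp_process k theta b g (bcp_order n b prio) []).

Definition utility (k n : nat) (theta v B : nat -> R) (prio : nat -> nat)
  (b g : nat -> R) (i : nat) : ext :=
  match bcp_outcome k n theta prio b g i with
  | None => Some 0
  | Some (s, p) =>
      if Rle_dec (theta s * p) (B i) then Some (theta s * (v i - p)) else None
  end.

Definition upd (b : nat -> R) (i : nat) (x : R) : nat -> R :=
  fun j => if Nat.eqb j i then x else b j.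

Definition valid_setting (k n : nat) (theta v B : nat -> R) (prio : nat -> nat)
  : Prop :=
  (1 <= k)%nat /\ (k <= n)%nat /\
  (forall j, (j + 1 < k)%nat -> theta (j + 1)%nat < theta j) /\
  0 < theta (k - 1)%nat /\
  (forall i, (i < n)%nat -> 0 <= v i) /\
  (forall i, (i < n)%nat -> 0 < B i) /\
  (forall i j, (i < n)%nat -> (j < n)%nat -> i <> j -> B i <> B j) /\
  (forall i j, (i < n)%nat -> (j < n)%nat -> prio i = prio j -> i = j).

(* Main.v *)
Require Import Defs.
From Stdlib Require Import Reals List Arith Lra Lia.
Open Scope R_scope.

Definition th (j : nat) : R := match j with 0%nat => 4 | _ => 2 end.
Definition vv (i : nat) : R := match i with 0%nat => 4 | 1%nat => 6 | _ => 2 end.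
Definition BB (i : nat) : R := match i with 0%nat => 2 | 1%nat => 4 | _ => 1 end.
Definition pr (i : nat) : nat := i.

Ltac red0 := cbv beta iota zeta delta [utility bcp_outcome bcp_order find_slot beforeb upd th vv BB pr bcp_process insert_ord lookup fold_right seq find existsb negb andb orb Nat.eqb Nat.ltb Nat.leb ext_lt].
Ltac crunch :=
  red0;
  repeat (match goal with
   | |- context [Rlt_dec ?a ?b] => destruct (Rlt_dec a b)
   | |- context [Req_EM_T ?a ?b] => destruct (Req_EM_T a b)
   | |- context [Rle_dec ?a ?b] => destruct (Rle_dec a b)
   end; red0; try (exfalso; lra)); lra.

Ltac leaf i e := exists i, e; split; [lia | split; [lra | crunch]].

Lemma main_game : forall b : nat -> R,
      (forall i, (i < 3)%nat -> 0 <= b i) ->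
      exists (i : nat) (b' : R),
        (i < 3)%nat /\ 0 <= b' /\
        ext_lt (utility 2 3 th vv BB pr b BB i)
               (utility 2 3 th vv BB pr (upd b i b') BB i).
Proof.
  intros b Hb.
  pose proof (Hb 0%nat ltac:(lia)) as P0.
  pose proof (Hb 1%nat ltac:(lia)) as P1.
  pose proof (Hb 2%nat ltac:(lia)) as P2.
  { destruct (Rtotal_order (b 1%nat) (1/2)) as [H1|[H1|H1]].
    { destruct (Rtotal_order (b 0%nat) (b 1%nat)) as [H2|[H2|H2]].
      { leaf 0%nat ((b 2%nat + (1/1))/2). }
      { leaf 1%nat ((b 0%nat + (1/2))/2). }
      { destruct (Rtotal_order (b 0%nat) (b 2%nat)) as [H3|[H3|H3]].
        { leaf 1%nat (1/1). }
        { destruct (Rtotal_order (b 0%nat) (1/2)) as [H4|[H4|H4]].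
          { leaf 1%nat ((b 0%nat + (1/2))/2). }
          { leaf 1%nat ((b 0%nat + (1/2))/2). }
          { leaf 0%nat ((b 1%nat + b 2%nat)/2). }
        }
        { destruct (Rtotal_order (b 2%nat) (1/2)) as [H5|[H5|H5]].
          { leaf 1%nat (1/1). }
          { leaf 1%nat ((b 0%nat + (1/2))/2). }
          { leaf 0%nat ((b 1%nat + b 2%nat)/2). }
        }
      }
    }
    { destruct (Rtotal_order (b 0%nat) (b 1%nat)) as [H6|[H6|H6]].
      { leaf 0%nat ((b 2%nat + (1/1))/2). }
      { leaf 1%nat (1/1). }
      { destruct (Rtotal_order (b 0%nat) 1) as [H7|[H7|H7]].
        { destruct (Rtotal_order (b 0%nat) (b 2%nat)) as [H8|[H8|H8]].
          { leaf 1%nat ((b 2%nat + (1/2))/2). }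
          { leaf 0%nat (b 1%nat). }
          { destruct (Rtotal_order (b 1%nat) (b 2%nat)) as [H9|[H9|H9]].
            { leaf 0%nat (b 1%nat). }
            { leaf 1%nat (b 0%nat + 1). }
            { leaf 1%nat (b 0%nat + 1). }
          }
        }
        { destruct (Rtotal_order (b 0%nat) (b 2%nat)) as [H10|[H10|H10]].
          { leaf 1%nat ((b 2%nat + (1/2))/2). }
          { leaf 0%nat (3/4). }
          { destruct (Rtotal_order (b 1%nat) (b 2%nat)) as [H11|[H11|H11]].
            { leaf 0%nat (b 1%nat). }
            { leaf 1%nat (b 0%nat + 1). }
            { leaf 1%nat (b 0%nat + 1). }
          }
        }
        { destruct (Rtotal_order (b 0%nat) (b 2%nat)) as [H12|[H12|H12]].
          { leaf 1%nat ((b 0%nat + (1/2))/2). }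
          { leaf 0%nat (1/1). }
          { destruct (Rtotal_order (b 1%nat) (b 2%nat)) as [H13|[H13|H13]].
            { leaf 0%nat ((b 1%nat + b 2%nat)/2). }
            { leaf 1%nat ((b 0%nat + (1/2))/2). }
            { leaf 1%nat ((b 0%nat + (1/2))/2). }
          }
        }
      }
    }
    { destruct (Rtotal_order (b 0%nat) (b 1%nat)) as [H14|[H14|H14]].
      { destruct (Rtotal_order (b 0%nat) (1/2)) as [H15|[H15|H15]].
        { destruct (Rtotal_order (b 0%nat) (b 2%nat)) as [H16|[H16|H16]].
          { destruct (Rtotal_order (b 1%nat) (b 2%nat)) as [H17|[H17|H17]].
            { leaf 2%nat ((b 0%nat + (1/2))/2). }
            { leaf 1%nat ((b 2%nat + (1/2))/2). }
            { destruct (Rtotal_order (b 0%nat) (1/4)) as [H18|[H18|H18]].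
              { leaf 0%nat ((b 2%nat + (1/1))/2). }
              { leaf 0%nat ((b 2%nat + (1/1))/2). }
              { leaf 1%nat ((b 0%nat + b 2%nat)/2). }
            }
          }
          { leaf 2%nat ((b 0%nat + (1/2))/2). }
          { leaf 2%nat ((b 0%nat + (1/2))/2). }
        }
        { destruct (Rtotal_order (b 1%nat) 1) as [H19|[H19|H19]].
          { destruct (Rtotal_order (b 1%nat) (b 2%nat)) as [H20|[H20|H20]].
            { leaf 2%nat ((b 1%nat + (1/2))/2). }
            { leaf 0%nat (3/2). }
            { destruct (Rtotal_order (b 0%nat) (b 2%nat)) as [H21|[H21|H21]].
              { leaf 0%nat (3/2). }
              { leaf 2%nat ((b 1%nat + (1/2))/2). }
              { leaf 2%nat ((b 1%nat + (1/2))/2). }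
            }
          }
          { destruct (Rtotal_order (b 1%nat) (b 2%nat)) as [H22|[H22|H22]].
            { leaf 2%nat (1/1). }
            { leaf 0%nat (3/2). }
            { destruct (Rtotal_order (b 0%nat) (b 2%nat)) as [H23|[H23|H23]].
              { leaf 0%nat (3/2). }
              { leaf 2%nat (1/1). }
              { leaf 2%nat (1/1). }
            }
          }
          { destruct (Rtotal_order (b 0%nat) (b 2%nat)) as [H24|[H24|H24]].
            { destruct (Rtotal_order (b 1%nat) (b 2%nat)) as [H25|[H25|H25]].
              { leaf 2%nat (1/1). }
              { leaf 1%nat ((b 2%nat + (1/2))/2). }
              { leaf 1%nat ((b 2%nat + (1/2))/2). }
            }
            { leaf 2%nat (1/1). }
            { leaf 2%nat (1/1). }
          }
        }
        { destruct (Rtotal_order (b 0%nat) 1) as [H26|[H26|H26]].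
          { leaf 1%nat ((b 0%nat + (1/2))/2). }
          { leaf 1%nat ((b 0%nat + (1/2))/2). }
          { leaf 1%nat (1/1). }
        }
      }
      { destruct (Rtotal_order (b 0%nat) (b 2%nat)) as [H27|[H27|H27]].
        { leaf 0%nat (3/8). }
        { leaf 1%nat ((b 2%nat + (1/2))/2). }
        { leaf 0%nat ((b 2%nat + (1/2))/2). }
      }
      { destruct (Rtotal_order (b 1%nat) (b 2%nat)) as [H28|[H28|H28]].
        { leaf 0%nat (3/8). }
        { leaf 1%nat ((b 2%nat + (1/2))/2). }
        { leaf 0%nat ((b 2%nat + (1/2))/2). }
      }
    }
  }
Qed.

Theorem lemma1 :
  exists (k n : nat) (theta v B : nat -> R) (prio : nat -> nat),
    valid_setting k n theta v B prio /\
    forall b : nat -> R,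
      (forall i, (i < n)%nat -> 0 <= b i) ->
      exists (i : nat) (b' : R),
        (i < n)%nat /\ 0 <= b' /\
        ext_lt (utility k n theta v B prio b B i)
               (utility k n theta v B prio (upd b i b') B i).
Proof.
  exists 2%nat, 3%nat, th, vv, BB, pr.
  split; [| exact main_game].
  unfold valid_setting.
  split; [lia|]. split; [lia|].
  split.
  { intros j Hj. destruct j as [|j]; [simpl; lra | lia]. }
  split; [simpl; lra|].
  split.
  { intros i Hi. destruct i as [|[|[|i]]]; simpl; try lra; lia. }
  split.
  { intros i Hi. destruct i as [|[|[|i]]]; simpl; try lra; lia. }
  split.
  { intros i j Hi Hj Hij.
    destruct i as [|[|[|i]]]; destruct j as [|[|[|j]]]; simpl; try lra; lia. }
  { intros i j _ _ H. exact H. }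
Qed.
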